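(* Let $\mathbb{K}$ be an algebraically closed field of characteristic $0$ and let $f\in\mathbb{K}[X,Y]$ be a polynomial of degree $d\ge1$. Then $$\dim_{\mathbb{K}}\ker\mathcal{R}_d(f)=\dim_{\mathbb{K}}\ker\mathcal{G}_d(f)-1,$$ and for every integer $\nu>d$, $$\dim_{\mathbb{K}}\ker\mathcal{R}_\nu(f)=\dim_{\mathbb{K}}\ker\mathcal{G}_{\nu-1}(f).$$
   Context: $\mathbb{K}[X,Y]_{\le n}$ denotes polynomials of total degree $\le n$. For a positive integer $\nu\ge d$: $\mathcal{G}_\nu(f):\mathbb{K}[X,Y]_{\le\nu-1}^2\to\mathbb{K}[X,Y]_{\le\nu+d-2}$, $(G,H)\mapsto f\partial_YG-G\partial_Yf-f\partial_XH+H\partial_Xf$. Let $E_\nu=\{(G,H)\in\mathbb{K}[X,Y]_{\le\nu-1}^2:\ \deg(XG+YH)\le\nu-1\}$ (dimension $\nu^2-1$), and $\mathcal{R}_\nu(f):E_\nu\to\mathbb{K}[X,Y]_{\le\nu+d-3}$ the map $(G,H)\mapsto f\partial_YG-G\partial_Yf-f\partial_XH+H\partial_Xf$ (its image has degree $\le\nu+d-3$). *)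

(* Defs.v *)
From HB Require Import structures.
From mathcomp Require Import all_boot all_order all_algebra.
From mathcomp Require Import mpoly.
Set Implicit Arguments. Unset Strict Implicit. Unset Printing Implicit Defensive.
Import GRing.Theory.
Local Open Scope ring_scope.

(* Bivariate polynomials K[X,Y] are {mpoly K[2]}; X = 'X_0, Y = 'X_1.
   msize p = 1 + total degree of p (and msize 0 = 0), so
   "deg p <= n" is "msize p <= n.+1". *)

Section Defs.
Variable K : fieldType.
Local Notation P := {mpoly K[2]}.

Definition varX : 'I_2 := ord0.
Definition varY : 'I_2 := ord_max.

Definition GRop (f G H : P) : P :=
  f * G^`M(varY) - G * f^`M(varY) - f * H^`M(varX) + H * f^`M(varX).

Definition kerG (nu : nat) (f : P) (G H : P) : Prop :=
  (msize G <= nu)%N /\ (msize H <= nu)%N /\ GRop f G H = 0.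

Definition inE (nu : nat) (G H : P) : Prop :=
  (msize G <= nu)%N /\ (msize H <= nu)%N /\
  (msize ('X_varX * G + 'X_varY * H) <= nu)%N.

Definition kerR (nu : nat) (f : P) (G H : P) : Prop :=
  inE nu G H /\ GRop f G H = 0.

Definition has_dim (S : P -> P -> Prop) (k : nat) : Prop :=
  exists (vG vH : 'I_k -> P),
    (forall i, S (vG i) (vH i)) /\
    (forall c : 'I_k -> K,
        \sum_(i < k) c i *: vG i = 0 -> \sum_(i < k) c i *: vH i = 0 ->
        forall i, c i = 0) /\
    (forall G H, S G H -> exists c : 'I_k -> K,
        G = \sum_(i < k) c i *: vG i /\ H = \sum_(i < k) c i *: vH i).
End Defs.

(* Main.v *)
Require Import Defs.
From HB Require Import structures.
From mathcomp Require Import all_boot all_order all_algebra.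
From mathcomp Require Import mpoly.
From mathcomp Require Import ring zify.
From Stdlib Require Import Classical.
Set Implicit Arguments. Unset Strict Implicit. Unset Printing Implicit Defensive.
Import GRing.Theory Order.TTheory.
Local Open Scope ring_scope.

Section LA.
Variables (K : fieldType) (V : lmodType K).

Fixpoint inspan (ws : seq V) (v : V) : Prop :=
  if ws is w :: ws' then exists a, inspan ws' (v - a *: w) else v = 0.

Lemma inspan0 ws : inspan ws 0.
Proof. elim: ws => //= w ws IH; exists 0; by rewrite scale0r subr0. Qed.

Lemma inspanZD ws a u v : inspan ws u -> inspan ws v -> inspan ws (a *: u + v).
Proof.
elim: ws u v => [|w ws IH] u v /=; first by move=> -> ->; rewrite scaler0 addr0.
move=> [b Hu] [c Hv]; exists (a * b + c).
have -> : a *: u + v - (a * b + c) *: w = a *: (u - b *: w) + (v - c *: w).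
  by rewrite scalerBr scalerA scalerDl opprD addrACA.
exact: IH.
Qed.

Definition subsp (S : V -> Prop) := S 0 /\ forall a u v, S u -> S v -> S (a *: u + v).

Lemma subsp_sum S k (c : 'I_k -> K) (b : 'I_k -> V) :
  subsp S -> (forall i, S (b i)) -> S (\sum_(i < k) c i *: b i).
Proof. move=> [H0 H1] Hb; elim/big_rec: _ => // i x _ Hx; exact: H1. Qed.

Definition basis_of (S : V -> Prop) k (b : 'I_k -> V) :=
  (forall i, S (b i)) /\
  (forall c : 'I_k -> K, \sum_(i < k) c i *: b i = 0 -> forall i, c i = 0) /\
  (forall v, S v -> exists c : 'I_k -> K, v = \sum_(i < k) c i *: b i).

Definition ext k (b : 'I_k -> V) (s0 : V) : 'I_k.+1 -> V :=
  fun i => if unlift ord0 i is Some j then b j else s0.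

Lemma sum_ext k (b : 'I_k -> V) s0 (c : 'I_k.+1 -> K) :
  \sum_(i < k.+1) c i *: ext b s0 i =
  c ord0 *: s0 + \sum_(j < k) c (lift ord0 j) *: b j.
Proof.
rewrite big_ord_recl /ext unlift_none; congr (_ + _).
by apply: eq_bigr => j _; rewrite liftK.
Qed.

Lemma extend (S S' : V -> Prop) k (b : 'I_k -> V) s0 :
  subsp S' -> basis_of S' b -> (forall v, S' v -> S v) -> S s0 -> ~ S' s0 ->
  (forall v, S v -> exists a, S' (v - a *: s0)) ->
  basis_of S (ext b s0).
Proof.
move=> sS' [Hb [Hind Hsp]] sub Ss0 nS's0 Hdec; split; [|split].
- by move=> i; rewrite /ext; case: unliftP => [j _|_] //; apply: sub.
- move=> c; rewrite sum_ext => Hc.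
  have c0 : c ord0 = 0.
    apply: contraPeq nS's0 => nz.
    have St : S' (\sum_(j < k) c (lift ord0 j) *: b j) by apply: subsp_sum.
    have -> : s0 = (- (c ord0)^-1) *: (\sum_(j < k) c (lift ord0 j) *: b j) + 0.
      move/eqP: Hc; rewrite addr_eq0 => /eqP Hc.
      by rewrite addr0 scaleNr -scalerN -Hc scalerA mulVf // scale1r.
    by move=> H; apply: H; exact: (proj2 sS' _ _ _ St (proj1 sS')).
  move: Hc; rewrite c0 scale0r add0r => /Hind Hl i.
  by case: (unliftP ord0 i) => [j ->|->].
- move=> v Sv; have [a Ha] := Hdec v Sv; have [c' Hc'] := Hsp _ Ha.
  exists (fun i => if unlift ord0 i is Some j then c' j else a).
  rewrite sum_ext unlift_none.
  under eq_bigr => j _ do rewrite liftK.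
  by rewrite -Hc' addrC subrK.
Qed.

Lemma findim ws : forall S, subsp S -> (forall v, S v -> inspan ws v) ->
  exists k (b : 'I_k -> V), basis_of S b.
Proof.
elim: ws => [|w ws IH] S sS HS.
  exists 0%N, (fun _ => 0); split; [by case|split; first by move=> c _; case].
  by move=> v /HS /= ->; exists (fun _ => 0); rewrite big_ord0.
pose S' v := S v /\ inspan ws v.
have sS' : subsp S'.
  split; first by split; [exact: sS.1 | exact: inspan0].
  by move=> a u v [Su Iu] [Sv Iv]; split; [exact: sS.2 | exact: inspanZD].
have [k [b Bb]] := IH S' sS' (fun v (H : S' v) => proj2 H).
case: (classic (exists s0, S s0 /\ ~ inspan ws s0)); last first.
  move=> nH; apply: IH => // v Sv; apply: NNPP => nI; apply: nH; by exists v.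
move=> [s0 [Ss0 nIs0]]; exists k.+1, (ext b s0); apply: (extend sS') => //.
- by move=> v [].
- by move=> [].
- have [a0 Ha0] := HS _ Ss0.
  have nz : a0 != 0.
    by apply/eqP => a00; apply: nIs0; move: Ha0; rewrite a00 scale0r subr0.
  move=> v Sv; have [a1 Ha1] := HS _ Sv; exists (a1 / a0); split.
    rewrite -scaleNr addrC; apply: sS.2 => //.
  have -> : v - (a1 / a0) *: s0 = (- (a1 / a0)) *: (s0 - a0 *: w) + (v - a1 *: w).
    rewrite scalerBr scaleNr scalerA mulNr scaleNr opprK divfK //.
    by rewrite -addrA [a1 *: w + _]addrC subrK addrC.
  exact: inspanZD.
Qed.

Lemma inspan_mem ws x : x \in ws -> inspan ws x.
Proof.
elim: ws => [|w ws IH] //= ; rewrite inE => /orP [/eqP ->|/IH H].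
  by exists 1; rewrite scale1r subrr; apply: inspan0.
by exists 0; rewrite scale0r subr0.
Qed.

Lemma inspan_sum ws (I : finType) (F : I -> V) (c : I -> K) :
  (forall i, inspan ws (F i)) -> inspan ws (\sum_i c i *: F i).
Proof. move=> H; elim/big_rec: _ => [|i x _ Hx]; [exact: inspan0 | exact: inspanZD]. Qed.
End LA.

Section P.
Variable K : fieldType.
Hypothesis char0 : [pchar K] =i pred0.
Local Notation P := {mpoly K[2]}.

Lemma natr_inj0 (a b : nat) : (a%:R = b%:R :> K) -> a = b.
Proof.
have H := pcharf0P K; move: H => [H _]; have {}H := H char0.
move=> E; case: (leqP a b) => ab.
  have : ((b - a)%:R == 0 :> K) by rewrite natrB // E subrr.
  by rewrite H subn_eq0 => ba; apply/eqP; rewrite eqn_leq ab ba.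
have : ((a - b)%:R == 0 :> K) by rewrite natrB ?E ?subrr // ltnW.
by rewrite H subn_eq0 => ba; apply/eqP; rewrite eqn_leq ba ltnW.
Qed.

Lemma mcoeff_Xd (i : 'I_2) (p : P) m : ('X_i * p^`M(i))@_m = p@_m *+ m i.
Proof.
case: (posnP (m i)) => [m0 | mpos].
  rewrite m0 mulr0n; apply/eqP; apply/negPn; rewrite -mcoeff_msupp mulrC.
  rewrite (perm_mem (msuppMX _ _)); apply/negP => /mapP [m' _ Em].
  by move: m0; rewrite Em mnmDE mnm1E eqxx.
have Hm : m = (U_(i) + (m - U_(i)))%MM.
  apply/mnmP => j; rewrite mnmDE mnmBE mnm1E; case: (i =P j) => [<-|_] /=; lia.
rewrite {1}Hm mulrC mcoeffMX mcoeff_mderiv addmC -Hm mnmBE mnm1E eqxx.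
by rewrite subn1 prednK.
Qed.

Definition Eu (p : P) := 'X_varX * p^`M(varX) + 'X_varY * p^`M(varY).

Lemma mdeg2 (m : 'X_{1..2}) : mdeg m = (m varX + m varY)%N.
Proof. rewrite mdegE big_ord_recl big_ord1; congr (_ + m _); exact: val_inj. Qed.

Lemma mcoeff_Eu (p : P) m : (Eu p)@_m = p@_m *+ mdeg m.
Proof. by rewrite mcoeffD !mcoeff_Xd -mulrnDr mdeg2. Qed.

Lemma msize_le_coef (p : P) k : (forall m, (k <= mdeg m)%N -> p@_m = 0) -> (msize p <= k)%N.
Proof.
move=> H; case: (leqP (msize p) k) => // Hk.
have pnz : p != 0 by apply/eqP => p0; move: Hk; rewrite p0 msize0.
have := mlead_deg pnz => Hd.
have /eqP := H (mlead p) ltac:(lia).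
by rewrite mleadc_eq0 (negbTE pnz).
Qed.

Lemma coef_gt_msize (p : P) m : (msize p <= mdeg m)%N -> p@_m = 0.
Proof. by move=> H; apply: memN_msupp_eq0; apply: msize_mdeg_ge. Qed.

Lemma msize_deriv i (p : P) : (msize (p^`M(i)) <= (msize p).-1)%N.
Proof.
apply: msize_le_coef => m H; rewrite mcoeff_mderiv coef_gt_msize ?mul0rn //.
rewrite mdegD mdeg1; lia.
Qed.

Lemma msize_Eu (p : P) : (msize (Eu p) <= msize p)%N.
Proof. by apply: msize_le_coef => m H; rewrite mcoeff_Eu coef_gt_msize ?mul0rn. Qed.

Lemma msizeM2 (p q : P) : (msize (p * q) <= (msize p + msize q).-1)%N.
Proof.
have [->|nz_p ] := eqVneq p 0; first by rewrite mul0r msize0.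
have [->|nz_q ] := eqVneq q 0; first by rewrite mulr0 msize0.
have [->|nz_pq] := eqVneq (p * q) 0; first by rewrite msize0.
rewrite -!mlead_deg //.
have /lemc_mdeg := mleadM_le p q; rewrite mdegD; lia.
Qed.

Lemma mlead_le_of (p : P) mq : (forall m, (mq < m)%O -> p@_m = 0) -> (mlead p <= mq)%O.
Proof.
move=> H; have [->|nz_p] := eqVneq p 0; first by rewrite mlead0 le0m.
rewrite leNgt; apply/negP => /H /eqP; by rewrite mleadc_eq0 (negbTE nz_p).
Qed.

Lemma mlead_Xd i (p : P) : (mlead ('X_i * p^`M(i)) <= mlead p)%O.
Proof. by apply: mlead_le_of => m /mcoeff_gt_mlead; rewrite mcoeff_Xd => ->; rewrite mul0rn. Qed.

Lemma mlead_Eu (p : P) : (mlead (Eu p) <= mlead p)%O.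
Proof. by apply: mlead_le_of => m /mcoeff_gt_mlead; rewrite mcoeff_Eu => ->; rewrite mul0rn. Qed.

Lemma mlead_pEu (p : P) : (mlead (p + Eu p) <= mlead p)%O.
Proof. by apply: mlead_le_of => m /mcoeff_gt_mlead; rewrite mcoeffD mcoeff_Eu => ->; rewrite mul0rn addr0. Qed.

Lemma dXi (i j : 'I_2) : ('X_j : P)^`M(i) = (j == i)%:R.
Proof.
rewrite mderivX mnm1E; case: eqP => [->|_]; last by rewrite scale0r.
have -> : (U_(i) - U_(i) = 0 :> 'X_{1..2})%MM.
  by apply/mnmP => k; rewrite mnmBE mnm0E subnn.
by rewrite mpolyX0 scale1r.
Qed.


Definition Ep (G H : P) := 'X_varX * G + 'X_varY * H.

Lemma XYne : (varX == varY) = false. Proof. by []. Qed.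
Lemma YXne : (varY == varX) = false. Proof. by []. Qed.

Lemma idY (f G H : P) :
  f * (Ep G H)^`M(varY) - Ep G H * f^`M(varY) =
  f * (H + Eu H) - H * Eu f + 'X_varX * GRop f G H.
Proof.
rewrite /Ep /GRop /Eu mderivD !mderivM !dXi eqxx XYne /=.
ring.
Qed.

Lemma idX (f G H : P) :
  f * (Ep G H)^`M(varX) - Ep G H * f^`M(varX) =
  f * (G + Eu G) - G * Eu f - 'X_varY * GRop f G H.
Proof.
rewrite /Ep /GRop /Eu mderivD !mderivM !dXi eqxx YXne /=.
ring.
Qed.

Lemma EuTop (p q : P) a b M : (msize p <= a.+1)%N -> (msize q <= b.+1)%N ->
  mdeg M = (a + b)%N -> (p * Eu q)@_M = (p * q)@_M *+ b.
Proof.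
move=> sp sq dM; rewrite !mcoeffM -sumrMnl; apply: eq_bigr => k /eqP Ek.
rewrite mcoeff_Eu.
have hxy : (mdeg k.1 + mdeg k.2 = a + b)%N by rewrite -mdegD -Ek dM.
have c1 : (a < mdeg k.1)%N -> p@_k.1 = 0.
  by move=> h; apply: coef_gt_msize; apply: (leq_trans sp).
have c2 : (b < mdeg k.2)%N -> q@_k.2 = 0.
  by move=> h; apply: coef_gt_msize; apply: (leq_trans sq).
move: c1 c2 hxy; case: (ltngtP (mdeg k.2) b) => h2 c1 c2 hxy.
- rewrite c1 ?mul0r ?mul0rn //; lia.
- by rewrite c2 ?mul0rn ?mulr0 ?mul0rn.
- by rewrite h2 mulrnAr.
Qed.


Lemma nz_of_msize (p : P) k : msize p = k.+1 -> p != 0.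
Proof. by move=> s; apply/eqP => p0; move: s; rewrite p0 msize0. Qed.

Lemma coef_lead_pEu (f Q : P) :
  (f * (Q + Eu Q))@_(mlead f + mlead Q) = mleadc f * (mleadc Q *+ (mdeg (mlead Q)).+1).
Proof. by rewrite mleadcMW ?mlead_pEu // mcoeffD mcoeff_Eu mulrS. Qed.

Lemma coef_lead_Eu (Q f : P) :
  (Q * Eu f)@_(mlead Q + mlead f) = mleadc Q * (mleadc f *+ mdeg (mlead f)).
Proof. by rewrite mleadcMW ?mlead_Eu // mcoeff_Eu. Qed.


Lemma core (f Q L : P) d nu : msize f = d.+1 -> msize Q = nu -> (0 < nu)%N ->
  L = f * (Q + Eu Q) - Q * Eu f -> (msize L <= (d + nu).-1)%N -> nu = d.
Proof.
move=> sf sQ nu0 EL sL.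
have fnz : f != 0 by apply: (nz_of_msize sf).
have Qnz : Q != 0 by apply: (@nz_of_msize _ nu.-1); rewrite sQ prednK.
have df := mlead_deg fnz; have dQ := mlead_deg Qnz.
have sL' : (msize L <= mdeg (mlead f + mlead Q)%MM)%N.
  rewrite mdegD; move: df dQ sL; rewrite sf sQ; move: (mdeg (mlead f)) (mdeg (mlead Q)) => x y; lia.
have := coef_gt_msize sL'.
rewrite EL mcoeffB (coef_lead_pEu f Q) (addmC (mlead f)) (coef_lead_Eu Q f).
have lf : f@_(mlead f) != 0 by rewrite mleadc_eq0.
have lQ : Q@_(mlead Q) != 0 by rewrite mleadc_eq0.
move: lf lQ; move: (f@_(mlead f)) (Q@_(mlead Q)) => a b lf lQ E.
have H : a * b * (((mdeg (mlead Q)).+1)%:R - (mdeg (mlead f))%:R) = 0.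
  by rewrite mulrBr !mulr_natr -E !mulrnAr (mulrC b).
move/eqP: H; rewrite !mulf_eq0 (negbTE lf) (negbTE lQ) /= subr_eq0.
move/eqP/natr_inj0; move: df dQ; rewrite sf sQ; move: (mdeg (mlead f)) (mdeg (mlead Q)) => x y; lia.
Qed.

Lemma msizeDB (p q : P) k : (msize p <= k)%N -> (msize q <= k)%N -> (msize (p - q) <= k)%N.
Proof.
move=> hp hq; apply: leq_trans (msizeD_le _ _) _.
by rewrite msizeN geq_max hp hq.
Qed.

Lemma msizeDD (p q : P) k : (msize p <= k)%N -> (msize q <= k)%N -> (msize (p + q) <= k)%N.
Proof. by move=> hp hq; apply: leq_trans (msizeD_le _ _) _; rewrite geq_max hp hq. Qed.

Lemma msizeMk (p q : P) a b k : (msize p <= a)%N -> (msize q <= b)%N -> ((a + b).-1 <= k)%N ->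
  (msize (p * q) <= k)%N.
Proof.
move=> hp hq hk; apply: leq_trans (msizeM2 _ _) _; apply: leq_trans hk.
by rewrite -!subn1 leq_sub2r // leq_add.
Qed.

Lemma msizeXi (i : 'I_2) : msize ('X_i : P) = 2.
Proof. by rewrite msizeX mdeg1. Qed.

Lemma sizeW (f E : P) i d nu : msize f = d.+1 -> (msize E <= nu)%N -> (0 < nu)%N ->
  (msize (f * E^`M(i) - E * f^`M(i)) <= (d + nu).-1)%N.
Proof.
move=> sf sE nu0; apply: msizeDB.
  apply: (msizeMk (a := d.+1) (b := nu.-1)); first by rewrite sf.
    by apply: leq_trans (msize_deriv _ _) _; rewrite -!subn1 leq_sub2r.
  lia.
apply: (msizeMk (a := nu) (b := d)) => //.
  by apply: leq_trans (msize_deriv _ _) _; rewrite sf.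
lia.
Qed.

Lemma sizeEp (G H : P) k : (msize G <= k)%N -> (msize H <= k)%N -> (0 < k)%N ->
  (msize (Ep G H) <= k.+1)%N.
Proof.
move=> hG hH k0; apply: msizeDD.
  apply: (msizeMk (a := 2) (b := k)) => //; by rewrite msizeXi.
apply: (msizeMk (a := 2) (b := k)) => //; by rewrite msizeXi.
Qed.

Lemma topB (f G H : P) d nu : msize f = d.+1 -> (d < nu)%N -> kerR nu f G H ->
  (msize G <= nu.-1)%N /\ (msize H <= nu.-1)%N.
Proof.
move=> sf dn [[sG [sH sE0]] D0]; have sE : (msize (Ep G H) <= nu)%N := sE0.
have nu0 : (0 < nu)%N by lia.
split.
  case: (ltnP (msize G) nu) => h; first lia.
  have eG : msize G = nu by apply/eqP; rewrite eqn_leq sG h.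
  have EL : f * (Ep G H)^`M(varX) - Ep G H * f^`M(varX) = f * (G + Eu G) - G * Eu f.
    by rewrite idX D0 mulr0 subr0.
  have := core sf eG nu0 EL (sizeW varX sf sE nu0); lia.
case: (ltnP (msize H) nu) => h; first lia.
have eH : msize H = nu by apply/eqP; rewrite eqn_leq sH h.
have EL : f * (Ep G H)^`M(varY) - Ep G H * f^`M(varY) = f * (H + Eu H) - H * Eu f.
  by rewrite idY D0 mulr0 addr0.
have := core sf eH nu0 EL (sizeW varY sf sE nu0); lia.
Qed.

Lemma kerRG (f G H : P) d nu : msize f = d.+1 -> (0 < d)%N -> (d < nu)%N ->
  (kerR nu f G H <-> kerG nu.-1 f G H).
Proof.
move=> sf d0 dn; split.
  move=> K0; have [h1 h2] := topB sf dn K0; case: K0 => _ D; by split; [|split].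
move=> [sG [sH D]]; split => //; split; first lia; split; first lia.
suff : (msize (Ep G H) <= nu)%N by [].
have nu1 : (0 < nu.-1)%N by lia.
apply: (leq_trans (sizeEp sG sH nu1)); lia.
Qed.


Lemma topR (f Q : P) d : msize f = d.+1 -> (msize Q <= d)%N -> (0 < d)%N ->
  (msize (f * (Q + Eu Q) - Q * Eu f) <= (d + d).-1)%N.
Proof.
move=> sf sQ d0; apply: msize_le_coef => M hM.
case: (ltnP (mdeg M) (d + d)) => h.
  have e1 : mdeg M = (d + d.-1)%N by lia.
  have e2 : mdeg M = (d.-1 + d)%N by lia.
  have sQ' : (msize Q <= d.-1.+1)%N by rewrite prednK.
  have sf' : (msize f <= d.+1)%N by rewrite sf.
  rewrite mcoeffB mulrDr mcoeffD (@EuTop f Q d d.-1 M sf' sQ' e1).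
  rewrite (@EuTop Q f d.-1 d M sQ' sf' e2) (mulrC Q f).
  by rewrite -mulrS prednK // subrr.
have s1 : (msize (f * (Q + Eu Q)) <= mdeg M)%N.
  apply: (msizeMk (a := d.+1) (b := d)); first by rewrite sf.
    by apply: msizeDD => //; apply: leq_trans (msize_Eu _) sQ.
  lia.
have s2 : (msize (Q * Eu f) <= mdeg M)%N.
  apply: (msizeMk (a := d) (b := d.+1)) => //; first by rewrite -sf msize_Eu.
  lia.
by rewrite mcoeffB !coef_gt_msize // subr0.
Qed.

Lemma coef_lead_Xd (p q : P) i :
  (p * ('X_i * q^`M(i)))@_(mlead p + mlead q) = mleadc p * (mleadc q *+ mlead q i).
Proof. by rewrite mleadcMW ?mlead_Xd // mcoeff_Xd. Qed.

Lemma coord_eq (f E R : P) d i : msize f = d.+1 -> msize E = d.+1 -> (0 < d)%N ->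
  (msize R <= (d + d).-1)%N -> f * E^`M(i) - E * f^`M(i) = R -> mlead E i = mlead f i.
Proof.
move=> sf sE d0 sR ER.
have fnz : f != 0 by apply: (nz_of_msize sf).
have Enz : E != 0 by apply: (nz_of_msize sE).
have df := mlead_deg fnz; have dE := mlead_deg Enz.
have E2 : f * ('X_i * E^`M(i)) - E * ('X_i * f^`M(i)) = 'X_i * R.
  by rewrite -ER; ring.
have sXR : (msize ('X_i * R) <= mdeg (mlead f + mlead E)%MM)%N.
  apply: (msizeMk (a := 2) (b := (d + d).-1)) => //; first by rewrite msizeXi.
  rewrite mdegD; move: df dE; rewrite sf sE; move: (mdeg (mlead f)) (mdeg (mlead E)) => x y; lia.
have := coef_gt_msize sXR; rewrite -E2 mcoeffB (coef_lead_Xd f E i) (addmC (mlead f)).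
rewrite (coef_lead_Xd E f i).
have lf : f@_(mlead f) != 0 by rewrite mleadc_eq0.
have lE : E@_(mlead E) != 0 by rewrite mleadc_eq0.
move: lf lE; move: (f@_(mlead f)) (E@_(mlead E)) => a b lf lE Z.
have H : a * b * ((mlead E i)%:R - (mlead f i)%:R) = 0.
  by rewrite mulrBr !mulr_natr -Z !mulrnAr (mulrC b).
move/eqP: H; rewrite !mulf_eq0 (negbTE lf) (negbTE lE) /= subr_eq0.
by move/eqP/natr_inj0.
Qed.

Lemma GRop_lin (f G1 H1 G2 H2 : P) c :
  GRop f (G1 - c *: G2) (H1 - c *: H2) = GRop f G1 H1 - c *: GRop f G2 H2.
Proof.
rewrite /GRop !mderivB !mderivZ -!mul_mpolyC; ring.
Qed.

Lemma GRop_ff (f : P) : GRop f (f^`M(varX)) (f^`M(varY)) = 0.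
Proof. by rewrite /GRop (mderiv_comm varX varY f); ring. Qed.

Lemma Ep_lin (G1 H1 G2 H2 : P) c :
  Ep (G1 - c *: G2) (H1 - c *: H2) = Ep G1 H1 - c *: Ep G2 H2.
Proof. rewrite /Ep -!mul_mpolyC; ring. Qed.


Lemma lemmaC (f G H : P) d : msize f = d.+1 -> (0 < d)%N -> kerG d f G H ->
  exists c : K, kerR d f (G - c *: f^`M(varX)) (H - c *: f^`M(varY)).
Proof.
move=> sf d0 [sG [sH D]].
have fnz := nz_of_msize sf; have df := mlead_deg fnz.
have dnz : (f@_(mlead f) *+ d) != 0.
  rewrite -mulr_natr mulf_neq0 ?mleadc_eq0 //.
  have [H0 _] := pcharf0P K; by rewrite (H0 char0) -lt0n.
exists ((Ep G H)@_(mlead f) / (f@_(mlead f) *+ d)).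
set c := _ / _.
set G' := G - c *: _; set H' := H - c *: _.
have sG' : (msize G' <= d)%N.
  apply: msizeDB => //; apply: leq_trans (msizeZ_le _ _) _.
  by apply: leq_trans (msize_deriv _ _) _; rewrite sf.
have sH' : (msize H' <= d)%N.
  apply: msizeDB => //; apply: leq_trans (msizeZ_le _ _) _.
  by apply: leq_trans (msize_deriv _ _) _; rewrite sf.
have D' : GRop f G' H' = 0 by rewrite /G' /H' GRop_lin D GRop_ff scaler0 subr0.
have cE : (Ep G' H')@_(mlead f) = 0.
  rewrite /G' /H' Ep_lin mcoeffB mcoeffZ.
  have -> : Ep (f^`M(varX)) (f^`M(varY)) = Eu f by [].
  have md : mdeg (mlead f) = d by move: df; rewrite sf => -[].
  by rewrite mcoeff_Eu md /c divfK // subrr.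
have sE' := sizeEp sG' sH' d0.
split; last exact: D'. split => //; split => //.
suff : (msize (Ep G' H') <= d)%N by [].
case: (ltnP (msize (Ep G' H')) d.+1) => h; first lia.
have eE : msize (Ep G' H') = d.+1 by apply/eqP; rewrite eqn_leq sE' h.
have Enz := nz_of_msize eE.
have ex := coord_eq sf eE d0 (topR sf sG' d0) (etrans (idX f G' H') ltac:(by rewrite D' mulr0 subr0)).
have ey := coord_eq sf eE d0 (topR sf sH' d0) (etrans (idY f G' H') ltac:(by rewrite D' mulr0 addr0)).
have em : mlead (Ep G' H') = mlead f.
  apply/mnmP => j.
  have [->|->] : j = varX \/ j = varY.
    by case: j => [[|[|k]] hk]; [left|right|]; try apply: val_inj.
  - exact: ex.
  - exact: ey.
by move: Enz; rewrite -mleadc_eq0 em cE eqxx.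
Qed.

Local Notation V := ({mpoly K[2]} * {mpoly K[2]})%type.

Definition SR nu (f : P) (v : V) : Prop := kerR nu f v.1 v.2.
Definition SG nu (f : P) (v : V) : Prop := kerG nu f v.1 v.2.

Lemma GRop_lin2 (f G1 H1 G2 H2 : P) a :
  GRop f (a *: G1 + G2) (a *: H1 + H2) = a *: GRop f G1 H1 + GRop f G2 H2.
Proof. rewrite /GRop !mderivD !mderivZ -!mul_mpolyC; ring. Qed.

Lemma Ep_lin2 (G1 H1 G2 H2 : P) a :
  Ep (a *: G1 + G2) (a *: H1 + H2) = a *: Ep G1 H1 + Ep G2 H2.
Proof. rewrite /Ep -!mul_mpolyC; ring. Qed.

Lemma GRop00 (f : P) : GRop f 0 0 = 0.
Proof. rewrite /GRop !mderiv0; ring. Qed.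

Lemma Ep00 : Ep 0 0 = 0 :> P.
Proof. rewrite /Ep; ring. Qed.

Lemma msizeZD (a : K) (p q : P) k : (msize p <= k)%N -> (msize q <= k)%N ->
  (msize (a *: p + q) <= k)%N.
Proof. by move=> hp hq; apply: msizeDD => //; apply: leq_trans (msizeZ_le _ _) hp. Qed.

Lemma subsp_SR nu (f : P) : subsp (SR nu f).
Proof.
split.
  have z1 : (0 : V).1 = 0 by [].
  have z2 : (0 : V).2 = 0 by [].
  rewrite /SR z1 z2; split; last exact: GRop00.
  split; first by rewrite msize0.
  split; first by rewrite msize0.
  have -> : 'X_varX * 0 + 'X_varY * 0 = Ep 0 0 :> P by [].
  by rewrite Ep00 msize0.
move=> a u v [[u1 [u2 u3]] u4] [[v1 [v2 v3]] v4]; rewrite /SR /kerR /inE /=.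
split; last by rewrite GRop_lin2 u4 v4 scaler0 addr0.
split; first exact: msizeZD.
split; first exact: msizeZD.
have -> : 'X_varX * (a *: u.1 + v.1) + 'X_varY * (a *: u.2 + v.2) = Ep (a *: u.1 + v.1) (a *: u.2 + v.2) by [].
by rewrite Ep_lin2; apply: msizeZD.
Qed.

Definition wsp nu : seq V :=
  [seq (('X_[bmnm m] : P), (0 : P)) | m <- index_enum 'X_{1..2 < nu}] ++
  [seq ((0 : P), ('X_[bmnm m] : P)) | m <- index_enum 'X_{1..2 < nu}].

Lemma fst_sum (I : finType) (F : I -> V) : (\sum_i F i).1 = \sum_i (F i).1.
Proof. by elim/big_rec2: _ => //= i y1 y2 _ ->. Qed.

Lemma snd_sum (I : finType) (F : I -> V) : (\sum_i F i).2 = \sum_i (F i).2.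
Proof. by elim/big_rec2: _ => //= i y1 y2 _ ->. Qed.

Lemma pair_ext (x y : V) : x.1 = y.1 -> x.2 = y.2 -> x = y.
Proof. by case: x y => [? ?] [? ?] /= -> ->. Qed.

Lemma span_SR nu (f : P) v : SR nu f v -> inspan (wsp nu) v.
Proof.
move=> [[s1 [s2 _]] _].
have -> : v = 1 *: (\sum_(m : 'X_{1..2 < nu}) v.1@_m *: ((('X_[bmnm m] : P), (0 : P)) : V))
   + \sum_(m : 'X_{1..2 < nu}) v.2@_m *: (((0 : P), ('X_[bmnm m] : P)) : V).
  rewrite scale1r; apply: pair_ext.
    rewrite /= fst_sum fst_sum /=.
    rewrite [X in _ + X]big1 ?addr0; last by move=> m _; exact: scaler0.
    by rewrite {1}(mpolywE s1); apply: eq_bigr.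
  rewrite /= snd_sum snd_sum /=.
  rewrite [X in X + _]big1 ?add0r; last by move=> m _; exact: scaler0.
  by rewrite {1}(mpolywE s2); apply: eq_bigr.
apply: inspanZD; apply: inspan_sum => m; apply: inspan_mem; rewrite mem_cat.
  by apply/orP; left; apply: map_f; rewrite mem_index_enum.
by apply/orP; right; apply: map_f; rewrite mem_index_enum.
Qed.

Lemma hasdim_of_basis (S : P -> P -> Prop) k (b : 'I_k -> V) :
  basis_of (fun v : V => S v.1 v.2) b -> has_dim S k.
Proof.
move=> [Hb [Hi Hs]]; exists (fun i => (b i).1), (fun i => (b i).2); split => //.
split.
  move=> c e1 e2; apply: Hi; apply: pair_ext.
    rewrite fst_sum; apply: (etrans _ e1); exact: eq_bigr.
  rewrite snd_sum; apply: (etrans _ e2); exact: eq_bigr.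
move=> G H SGH; have [c Hc] := Hs (G, H) SGH; exists c; split.
  rewrite -[LHS]/((G, H) : V).1 Hc fst_sum; exact: eq_bigr.
rewrite -[LHS]/((G, H) : V).2 Hc snd_sum; exact: eq_bigr.
Qed.

Lemma has_dim_ext (S S' : P -> P -> Prop) k :
  has_dim S k -> (forall G H, S G H <-> S' G H) -> has_dim S' k.
Proof.
move=> [vG [vH [h1 [h2 h3]]]] E; exists vG, vH; split; first by move=> i; apply/E.
by split => // G H /E; apply: h3.
Qed.

Lemma main1 (f : P) d : msize f = d.+1 -> (0 < d)%N ->
  exists a b : nat, has_dim (kerR d f) a /\ has_dim (kerG d f) b /\ a = (b - 1)%N.
Proof.
move=> sf d0.
have [k [b Bb]] := findim (subsp_SR d f) (@span_SR d f).
exists k, k.+1; split; first exact: hasdim_of_basis Bb.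
split; last by rewrite subn1.
apply: hasdim_of_basis.
have fnz := nz_of_msize sf; have df := mlead_deg fnz.
have md : mdeg (mlead f) = d by move: df; rewrite sf => -[].
apply: (@extend _ _ (fun v : V => kerG d f v.1 v.2) (SR d f) _ b (f^`M(varX), f^`M(varY))).
- exact: subsp_SR.
- exact: Bb.
- by move=> v [[s1 [s2 _]] D]; split; [|split].
- split; first by apply: leq_trans (msize_deriv _ _) _; rewrite sf.
  split; first by apply: leq_trans (msize_deriv _ _) _; rewrite sf.
  exact: GRop_ff.
- move=> [[_ [_ sE]] _]; move: sE => /=.
  have -> : 'X_varX * f^`M(varX) + 'X_varY * f^`M(varY) = Eu f by [].
  move=> sE; have := coef_gt_msize (p := Eu f) (m := mlead f); rewrite md => /(_ sE).
  rewrite mcoeff_Eu md => /eqP; rewrite -mulr_natr mulf_eq0 mleadc_eq0 (negbTE fnz) /=.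
  have [H0 _] := pcharf0P K; by rewrite (H0 char0) => /eqP d00; move: d0; rewrite d00.
- move=> v Sv; have [c Hc] := lemmaC sf d0 Sv; by exists c.
Qed.

Lemma main2 (f : P) d nu : msize f = d.+1 -> (0 < d)%N -> (d < nu)%N ->
  exists a b : nat, has_dim (kerR nu f) a /\ has_dim (kerG nu.-1 f) b /\ a = b.
Proof.
move=> sf d0 dn.
have [k [b Bb]] := findim (subsp_SR nu f) (@span_SR nu f).
exists k, k; split; first exact: hasdim_of_basis Bb.
split => //; apply: (has_dim_ext (hasdim_of_basis (S := kerR nu f) Bb)) => G H.
exact: (kerRG G H sf d0 dn).
Qed.

End P.

Theorem proposition1p5 (K : closedFieldType) (f : {mpoly K[2]}) (d : nat) :
  [pchar K] =i pred0 ->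
  (1 <= d)%N -> msize f = d.+1 ->
  (exists a b : nat,
      has_dim (kerR d f) a /\ has_dim (kerG d f) b /\ a = (b - 1)%N) /\
  (forall nu : nat, (d < nu)%N ->
    exists a b : nat,
      has_dim (kerR nu f) a /\ has_dim (kerG nu.-1 f) b /\ a = b).
Proof.
move=> char0 d1 sf; split; first exact: (main1 char0 sf d1).
by move=> nu dn; apply: (main2 char0 sf d1 dn).
Qed.
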